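(* Let $n\ge5$ be odd, $k=\frac{n-3}{2}$, $G=(V,E)=K_n$, let $C=(v_1,\dots,v_{2k+1})$ be a cycle of length $n-2$ in $G$ and $s,t$ the two vertices not on $C$. Then the $C$-induced constraint $x_{\{s,t\}}+k\cdot x(\delta(V(C)))+\sum_{e\in E[V\setminus\{s,t\}]}\ell(e)x_e\ge 2k+1$ is $(n-1)$-expressing.
   Context: $\delta(V(C))$ is the set of edges with exactly one endpoint on $C$, $E[S]$ the set of edges with both endpoints in $S$, $x(S)=\sum_{e\in S}x_e$. For $i\ne j$, $\ell(\{v_i,v_j\})=|j-i|$ if $|j-i|$ is odd and $2k+1-|j-i|$ otherwise. Expressibility of a constraint $a^\top x\ge b$ valid for the dominant of the odd cycle polytope of $G$: let $\mathcal{T}$ be the set of odd cycles $D$ of $G$ with $a^\top\chi^D=b$. For $Q\subseteq E$, the set $E_Q$ of $Q$-expressible edges is obtained by starting with $E_Q=Q$ and, as long as there exist $e\in E\setminus E_Q$ and $D\in\mathcal{T}$ with $e\in D$ and $D\setminus\{e\}\subseteq E_Q$, adding $e$ to $E_Q$. The constraint is $k'$-expressing if there is $Q\subseteq E$ with $|Q|\le k'$ and $E_Q=E$. *)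

(* Defs.v *)
From mathcomp Require Import all_boot.
Set Implicit Arguments. Unset Strict Implicit. Unset Printing Implicit Defensive.

(* The complete graph K_n on vertex set 'I_n; an edge is a 2-element vertex set. *)
Definition edges (n : nat) : {set {set 'I_n}} := [set e : {set 'I_n} | #|e| == 2].

(* D is (the edge set of) an odd cycle of K_n: a closed walk w_0 .. w_(m-1) w_0
   through m >= 3 (m odd) pairwise distinct vertices. *)
Definition is_odd_cycle (n : nat) (D : {set {set 'I_n}}) : Prop :=
  exists (m : nat) (w : 'I_m.+3 -> 'I_n),
    odd m.+3 /\ injective w /\
    D = [set [set w i; w (inord (i.+1 %% m.+3))] | i : 'I_m.+3].

(* ell({v_i, v_j}) for the cycle C = (v_0, ..., v_(n-3)) of length n-2 = 2k+1, i < j *)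
Definition ell (n : nat) (i j : 'I_(n - 2)) : nat :=
  let d := j - i in if odd d then d else (n - 2) - d.

Definition lhs (n : nat) (v : 'I_(n - 2) -> 'I_n) (s t : 'I_n)
    (D : {set {set 'I_n}}) : nat :=
  let VC := [set v i | i : 'I_(n - 2)] in
  let k := (n - 3)./2 in
  ([set s; t] \in D)
  + k * #|[set e in D | (e \in edges n) && (#|e :&: VC| == 1)]|
  + \sum_(i : 'I_(n - 2)) \sum_(j : 'I_(n - 2) | i < j)
        ell i j * ([set v i; v j] \in D).

(* the tight odd cycles: odd cycles D with a^T chi^D = b = 2k+1 = n-2 *)
Definition tight (n : nat) (v : 'I_(n - 2) -> 'I_n) (s t : 'I_n)
    (D : {set {set 'I_n}}) : Prop :=
  is_odd_cycle D /\ lhs v s t D = n - 2.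

Inductive expressible (n : nat) (T : {set {set 'I_n}} -> Prop)
    (Q : {set {set 'I_n}}) : {set 'I_n} -> Prop :=
| expr_base e : e \in Q -> expressible T Q e
| expr_step e D : T D -> e \in D ->
    (forall f, f \in D -> f != e -> expressible T Q f) -> expressible T Q e.

Definition k_expressing (n : nat) (T : {set {set 'I_n}} -> Prop) (k' : nat) : Prop :=
  exists Q : {set {set 'I_n}}, Q \subset edges n /\ #|Q| <= k' /\
    forall e, e \in edges n -> expressible T Q e.

(* Main.v *)
Require Import Defs.
From mathcomp Require Import all_boot zify.
Set Implicit Arguments. Unset Strict Implicit. Unset Printing Implicit Defensive.

Lemma memE (T : finType) (D : {set T}) x : ((x \in D) : nat) = \sum_(e in D) (e == x).
Proof.
case: (boolP (x \in D)) => Hx.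
  rewrite (bigD1 x) //= eqxx big1 // => e /andP[_ He].
  by rewrite (negbTE He).
rewrite big1 // => e He; case: eqP => // Hex.
by subst; rewrite He in Hx.
Qed.

Lemma cardE' (T : finType) (D : {set T}) (P : pred T) :
  #|[set e in D | P e]| = \sum_(e in D) (P e : nat).
Proof.
rewrite -sum1_card [RHS]big_mkcond /= [LHS]big_mkcond /=.
apply: eq_bigr => e _; rewrite inE; by case: (e \in D); case: (P e).
Qed.

Section S.
Variables (n : nat) (v : 'I_(n - 2) -> 'I_n) (s t : 'I_n).
Hypotheses (vinj : injective v) (st : s != t) (vs : forall i, v i != s)
  (vt : forall i, v i != t).

Definition VC := [set v i | i : 'I_(n - 2)].
Definition W (e : {set 'I_n}) : nat :=
  (e == [set s; t]) + (n - 3)./2 * ((e \in edges n) && (#|e :&: VC| == 1))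
  + \sum_(i : 'I_(n - 2)) \sum_(j : 'I_(n - 2) | i < j) ell i j * ([set v i; v j] == e).

Lemma lhsE D : lhs v s t D = \sum_(e in D) W e.
Proof.
rewrite /lhs /W /= !big_split /=; congr (_ + _ + _).
- exact: memE.
- by rewrite cardE' big_distrr.
- under eq_bigr => i _ do under eq_bigr => j _ do rewrite memE big_distrr /=.
  under eq_bigr => i _ do rewrite exchange_big /=.
  rewrite exchange_big; apply: eq_bigr => e _; apply: eq_bigr => i _.
  by apply: eq_bigr => j _; rewrite eq_sym.
Qed.

Lemma notVC x : (forall i, v i != x) -> x \notin VC.
Proof. move=> H; apply/imsetP => -[i _ Hi]; by move: (H i); rewrite Hi eqxx. Qed.

Lemma inVC i : v i \in VC.
Proof. exact: imset_f. Qed.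

Lemma term3_0 (e : {set 'I_n}) x : x \in e -> x \notin VC ->
  \sum_(i : 'I_(n - 2)) \sum_(j : 'I_(n - 2) | i < j) ell i j * ([set v i; v j] == e) = 0.
Proof.
move=> xe xV; apply: big1 => i _; apply: big1 => j _.
case: eqP => [E|]; last by rewrite muln0.
by move: xe xV; rewrite -E !inE => /orP[]/eqP->; rewrite inVC.
Qed.

Lemma W_st : W [set s; t] = 1.
Proof.
rewrite /W eqxx (term3_0 (x := s)) ?setU11 ?notVC // addn0.
suff -> : [set s; t] :&: VC = set0 by rewrite cards0 andbF muln0.
apply/setP => x; rewrite !inE.
case: (boolP (x \in VC)) => H; last by rewrite andbF.
rewrite andbT; apply/negbTE; rewrite negb_or; apply/andP; split.
  by apply: contraTneq H => ->; rewrite notVC.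
by apply: contraTneq H => ->; rewrite notVC.
Qed.

Lemma setI_one x y : x \notin VC -> y \in VC -> [set x; y] :&: VC = [set y].
Proof.
move=> xV yV; apply/setP => z; rewrite !inE.
case: (eqVneq z y) => [->|Hzy]; first by rewrite yV orbT.
rewrite orbF andbC; case: (eqVneq z x) => [->|]; by rewrite ?(negbTE xV) ?andbF.
Qed.

Lemma W_xv x a : (forall i, v i != x) -> W [set x; v a] = (n - 3)./2.
Proof.
move=> Hx; rewrite /W (term3_0 (x := x)) ?setU11 ?notVC // addn0.
rewrite setI_one ?notVC ?inVC // cards1 eqxx andbT.
have -> : [set x; v a] \in edges n.
  by rewrite /edges inE cards2; have := Hx a; rewrite eq_sym => ->.
have -> : ([set x; v a] == [set s; t]) = false.
  apply/negbTE; apply/eqP => E.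
  have : v a \in [set s; t] by rewrite -E !inE eqxx orbT.
  by rewrite !inE (negbTE (vs a)) (negbTE (vt a)).
by rewrite muln1.
Qed.

Lemma pair_eq (i j a b : 'I_(n - 2)) : i < j -> a < b ->
  ([set v i; v j] == [set v a; v b]) = (i == a) && (j == b).
Proof.
move=> ij ab; apply/idP/idP; last by case/andP => /eqP-> /eqP->.
move/eqP => E.
have : v i \in [set v a; v b] by rewrite -E !inE eqxx.
have : v j \in [set v a; v b] by rewrite -E !inE eqxx orbT.
rewrite !inE => /orP[]/eqP/vinj Hj /orP[]/eqP/vinj Hi; subst; rewrite ?eqxx //;
 try (by rewrite ltnn in ij); by move: (ltn_trans ij ab); rewrite ltnn.
Qed.

Lemma W_vv (a b : 'I_(n - 2)) : a < b -> W [set v a; v b] = ell a b.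
Proof.
move=> ab; rewrite /W.
have -> : ([set v a; v b] == [set s; t]) = false.
  apply/negbTE; apply/eqP => E.
  have : v a \in [set s; t] by rewrite -E !inE eqxx.
  by rewrite !inE (negbTE (vs a)) (negbTE (vt a)).
have -> : [set v a; v b] :&: VC = [set v a; v b].
  by apply/setIidPl/subsetP => x; rewrite !inE => /orP[]/eqP->; rewrite inVC.
rewrite cards2 (inj_eq vinj).
have -> : (a == b) = false by apply/eqP => E; move: ab; rewrite E ltnn.
rewrite andbF muln0 add0n.
under eq_bigr => i _ do under eq_bigr => j Hij do rewrite pair_eq //.
rewrite (bigD1 a) //= [X in _ + X]big1 ?addn0; last first.
  move=> i /negbTE ia; apply: big1 => j _; by rewrite ia muln0.
rewrite (bigD1 b) //= !eqxx /= muln1 big1 ?addn0 // => j /andP[_ /negbTE ->].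
by rewrite ?andbF muln0.
Qed.
End S.

Definition cyc n M (f : nat -> 'I_n) : {set {set 'I_n}} :=
  [set [set f (val i); f ((val i).+1 %% M)] | i : 'I_M].

Definition finj n M (f : nat -> 'I_n) :=
  forall x y, x < M -> y < M -> f x = f y -> x = y.

Definition nx M x := if x.+1 < M then x.+1 else 0.

Lemma modS M l : l < M -> l.+1 %% M = nx M l.
Proof.
rewrite /nx => lM; case: ifP => H; first by rewrite modn_small.
have -> : l.+1 = M by apply/eqP; rewrite eqn_leq lM leqNgt H.
by rewrite modnn.
Qed.

Lemma nx_lemma M I J : 2 < M -> I < M -> J < M -> (I = J \/ I = nx M J) ->
  (nx M I = J \/ nx M I = nx M J) -> I = J.
Proof. rewrite /nx; case: ifP; case: ifP; lia. Qed.

Lemma cyc_odd n m (f : nat -> 'I_n) : odd m.+3 -> finj m.+3 f -> is_odd_cycle (cyc m.+3 f).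
Proof.
move=> om fi; exists m, (fun i => f (val i)); split => //; split.
  by move=> i j E; apply/val_inj; exact: (fi _ _ (ltn_ord i) (ltn_ord j) E).
by apply: eq_imset => i /=; rewrite inordK // ltn_pmod.
Qed.

Lemma cyc_edge_inj n M (f : nat -> 'I_n) : 2 < M -> finj M f ->
  {in predT &, injective (fun i : 'I_M => [set f (val i); f ((val i).+1 %% M)])}.
Proof.
move=> M2 fi i j _ _ /= E; apply: val_inj => /=.
have iM := ltn_ord i; have jM := ltn_ord j.
have M0 : 0 < M by apply: leq_trans M2.
have iM' : i.+1 %% M < M by rewrite ltn_pmod.
have jM' : j.+1 %% M < M by rewrite ltn_pmod.
have H1 : f i \in [set f j; f (j.+1 %% M)] by rewrite -E !inE eqxx.
have H2 : f (i.+1 %% M) \in [set f j; f (j.+1 %% M)] by rewrite -E !inE eqxx orbT.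
rewrite !inE in H1 H2.
apply: (nx_lemma M2 iM jM); rewrite -!modS //.
  by case/orP: H1 => /eqP/fi H; [left | right]; apply: H.
by case/orP: H2 => /eqP/fi H; [left | right]; apply: H.
Qed.

Lemma cyc_lhs n (v : 'I_(n - 2) -> 'I_n) s t M (f : nat -> 'I_n) : 2 < M -> finj M f ->
  lhs v s t (cyc M f) = \sum_(i < M) W v s t [set f i; f (i.+1 %% M)].
Proof.
move=> M2 fi; rewrite lhsE /cyc big_imset /=; last exact: cyc_edge_inj.
by apply: eq_bigl => i; rewrite inE.
Qed.

Definition tri n (x y z : 'I_n) : nat -> 'I_n :=
  fun l => if l == 0 then x else if l == 1 then y else z.

Section M.
Variables (n : nat) (v : 'I_(n - 2) -> 'I_n) (s t : 'I_n).
Hypotheses (n5 : 5 <= n) (nodd : odd n) (vinj : injective v) (st : s != t)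
  (vs : forall i, v i != s) (vt : forall i, v i != t).

Lemma tri_finj (x y z : 'I_n) : x != y -> y != z -> z != x -> finj 3 (tri x y z).
Proof.
move=> xy yz zx; rewrite /finj /tri; move=> [|[|[|?]]] [|[|[|?]]] //= _ _ E;
first [by move: xy; rewrite E eqxx | by move: yz; rewrite E eqxx | by move: zx; rewrite E eqxx].
Qed.

Lemma tri_lhs (x y z : 'I_n) : x != y -> y != z -> z != x ->
  lhs v s t (cyc 3 (tri x y z)) = W v s t [set x; y] + W v s t [set y; z] + W v s t [set z; x].
Proof.
move=> xy yz zx; rewrite cyc_lhs //; last exact: tri_finj.
by rewrite !big_ord_recr big_ord0 /= add0n.
Qed.

Definition K := (n - 3)./2.
Lemma KK : K + K = n - 3.
Proof.
rewrite /K addnn; have := odd_double_half (n - 3).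
by rewrite oddB; [rewrite nodd /= | apply: leq_trans n5].
Qed.

Lemma N0 : 0 < n - 2. Proof. by rewrite subn_gt0; apply: leq_trans n5. Qed.
Definition o0 : 'I_(n - 2) := Ordinal N0.

Definition Q := [set [set s; v i] | i : 'I_(n - 2)] :|: [set [set t; v o0]].
Notation X := (expressible (tight v s t) Q).

Lemma Xsym x y : X [set x; y] -> X [set y; x].
Proof. by rewrite setUC. Qed.

Lemma tri_step (x y z : 'I_n) : x != y -> y != z -> z != x ->
  W v s t [set x; y] + W v s t [set y; z] + W v s t [set z; x] = n - 2 ->
  X [set y; z] -> X [set z; x] -> X [set x; y].
Proof.
move=> xy yz zx HW Hyz Hzx.
apply: (@expr_step _ _ _ _ (cyc 3 (tri x y z))).
- split; first exact: (@cyc_odd n 0 _ isT (tri_finj xy yz zx)).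
  by rewrite tri_lhs.
- by apply/imsetP; exists ord0.
- move=> g /imsetP[i _ ->]; case: i => [[|[|[|?]]] Hi] //= Hne.
  + by case/eqP: Hne.
Qed.

Lemma ell_odd (a b : 'I_(n - 2)) : odd (b - a) -> ell a b = b - a.
Proof. by rewrite /ell /= => ->. Qed.
Lemma ell_even (a b : 'I_(n - 2)) : ~~ odd (b - a) -> ell a b = n - 2 - (b - a).
Proof. by rewrite /ell /= => /negbTE ->. Qed.

Lemma W_s a : W v s t [set s; v a] = K. Proof. exact: W_xv. Qed.
Lemma W_t a : W v s t [set t; v a] = K. Proof. exact: W_xv. Qed.
Lemma W_s' a : W v s t [set v a; s] = K. Proof. by rewrite setUC W_s. Qed.
Lemma W_t' a : W v s t [set v a; t] = K. Proof. by rewrite setUC W_t. Qed.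
Lemma W_vv1 (a b : 'I_(n - 2)) : a < b -> W v s t [set v a; v b] = ell a b.
Proof. exact: W_vv. Qed.
Lemma W_st1 : W v s t [set s; t] = 1. Proof. exact: W_st. Qed.

Lemma Xs a : X [set s; v a].
Proof. by apply: expr_base; rewrite inE; apply/orP; left; apply: imset_f. Qed.
Lemma Xt0 : X [set t; v o0].
Proof. by apply: expr_base; rewrite !inE eqxx orbT. Qed.

Lemma Xst : X [set s; t].
Proof.
apply: (tri_step (z := v o0)) => //; first by rewrite eq_sym.
  by rewrite W_st1 W_t W_s'; have := KK; lia.
  exact: Xt0.
exact: Xsym (Xs o0).
Qed.

Lemma Xt a : X [set t; v a].
Proof.
apply: (tri_step (z := s)).
- by rewrite eq_sym; apply: vt.
- exact: vs.
- exact: st.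
- by rewrite W_t W_s' W_st1; have := KK; lia.
- exact: Xsym (Xs a).
exact: Xst.
Qed.

Lemma Xcedge (p q : 'I_(n - 2)) : val q = (val p).+1 -> X [set v p; v q].
Proof.
move=> Hq.
have pq : p < q by rewrite Hq.
apply: (tri_step (z := s)) => //.
- by rewrite (inj_eq vinj); apply/eqP => E; move: pq; rewrite E ltnn.
- by rewrite eq_sym.
- by rewrite W_vv1 // ell_odd Hq ?subSnn // W_s' W_s; have := KK; lia.
- exact: Xsym (Xs q).
exact: Xs.
Qed.

Lemma Xeven (a b : 'I_(n - 2)) : a < b -> ~~ odd (b - a) -> X [set v a; v b].
Proof.
move=> ab ev.
have bN := ltn_ord b.
have d2 : 2 <= b - a.
  have d0 : 0 < b - a by rewrite subn_gt0.
  have d1 : b - a != 1 by apply: contraNneq ev => ->.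
  lia.
pose f := fun l => v (insubd a (a + l)).
have fv : forall l, l <= b - a -> val (insubd a (a + l) : 'I_(n - 2)) = a + l.
  by move=> l ld; rewrite val_insubd ifT //; lia.
have fi : finj (b - a).+1 f.
  move=> x y xl yl /vinj /(congr1 val); rewrite !fv; lia.
have M2 : 2 < (b - a).+1 by lia.
have Hd : (b - a).+1 = (b - a - 2).+3 by lia.
have fd : insubd a (a + (b - a)) = b by apply: val_inj => /=; rewrite fv //; lia.
have f0 : insubd a (a + 0) = a by apply: val_inj => /=; rewrite fv //; lia.
apply: (@expr_step _ _ _ _ (cyc (b - a).+1 f)).
- split.
  + rewrite Hd; apply: cyc_odd; [rewrite -Hd /=; exact: ev | by rewrite -Hd].
  + rewrite cyc_lhs // big_ord_recr /=.
    have -> : \sum_(i < b - a) W v s t [set f (widen_ord (leqnSn (b - a)) i);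
                 f ((widen_ord (leqnSn (b - a)) i).+1 %% (b - a).+1)] = b - a.
      rewrite -[RHS]card_ord -sum1_card; apply: eq_bigr => i _ /=.
      have ilt := ltn_ord i.
      rewrite modn_small ?ltnS // /f W_vv1; last by rewrite !fv; lia.
      by rewrite ell_odd !fv ?addnS ?subSnn //; lia.
    rewrite modnn /f fd f0 setUC W_vv1 // ell_even //; lia.
- apply/imsetP; exists ord_max => //=.
  by rewrite modnn /f fd f0 setUC.
- move=> g /imsetP[i _ ->] Hne.
  have vi : val i = nat_of_ord i by [].
  rewrite vi in Hne *.
  have ilt := ltn_ord i.
  case: (ltngtP i (b - a)) => id.
  + rewrite modn_small ?ltnS //; apply: Xcedge; rewrite !fv /=; lia.
  + lia.
  + by move: Hne; rewrite id modnn /f fd f0 setUC eqxx.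
Qed.

Lemma vneq (p q : 'I_(n - 2)) : nat_of_ord p != nat_of_ord q -> v p != v q.
Proof. by rewrite (inj_eq vinj). Qed.

Lemma Xchord (a b : 'I_(n - 2)) : a < b -> X [set v a; v b].
Proof.
move=> ab.
have bN := ltn_ord b.
have aN := ltn_ord a.
case: (boolP (odd (b - a))) => od; last exact: Xeven.
case: (eqVneq (b - a) 1) => [d1|d1].
  by apply: Xcedge => /=; lia.
have d2 : b - a != 2 by apply: contraTneq od => ->.
case: (ltnP b.+1 (n - 2)) => bN1.
- pose c : 'I_(n - 2) := insubd a b.+1.
  have cv : val c = b.+1 by rewrite val_insubd bN1.
  have cv' : nat_of_ord c = b.+1 := cv.
  have bc : b < c by rewrite cv'.
  have ac : a < c by rewrite cv'; lia.
  apply: (tri_step (z := v c)).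
  + apply: vneq; apply/eqP; lia.
  + apply: vneq; apply/eqP; lia.
  + apply: vneq; apply/eqP; lia.
  + rewrite W_vv1 // W_vv1 // setUC W_vv1 // ell_odd // ell_odd; last by rewrite cv' subSnn.
    rewrite ell_even; last by rewrite cv' subSn ?(ltnW ab) //= od.
    rewrite cv'; lia.
  + exact: Xcedge.
  + apply: Xsym; apply: Xeven => //; by rewrite cv' subSn ?(ltnW ab) //= od.
- have a1 : 0 < a.
    rewrite lt0n; apply: contraTneq od => a0.
    have -> : b - a = n - 3 by lia.
    by rewrite -KK addnn odd_double.
  pose c : 'I_(n - 2) := insubd a a.-1.
  have cv : val c = a.-1 by rewrite val_insubd ifT //; lia.
  have cv' : nat_of_ord c = a.-1 := cv.
  have ca : c < a by rewrite cv'; lia.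
  have cb : c < b by rewrite cv'; lia.
  have ev : ~~ odd (b - c).
    rewrite cv'; have -> : b - a.-1 = (b - a).+1 by lia.
    by rewrite /= od.
  apply: (tri_step (z := v c)).
  + apply: vneq; apply/eqP; lia.
  + apply: vneq; apply/eqP; lia.
  + apply: vneq; apply/eqP; lia.
  + rewrite W_vv1 // setUC W_vv1 // W_vv1 // ell_odd // ell_even // ell_odd;
      last by rewrite cv'; have -> : a - a.-1 = 1 by lia.
    rewrite cv'; lia.
  + by apply: Xsym; apply: Xeven.
  + by apply: Xcedge => /=; rewrite cv'; lia.
Qed.

Lemma cover x : x = s \/ x = t \/ exists i, x = v i.
Proof.
have : x \in VC v :|: [set s; t].
  suff -> : VC v :|: [set s; t] = setT by rewrite inE.
  apply/eqP; rewrite eqEcard subsetT cardsT card_ord cardsU.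
  have -> : VC v :&: [set s; t] = set0.
    apply/setP => y; rewrite !inE.
    case: (boolP (y \in VC v)) => //= /imsetP[i _ ->].
    by rewrite (negbTE (vs i)) (negbTE (vt i)).
  rewrite cards0 subn0 card_imset // card_ord cards2 st /=; lia.
rewrite !inE => /orP[/imsetP[i _ ->]| /orP[/eqP->|/eqP->]].
- by right; right; exists i.
- by left.
- by right; left.
Qed.

Lemma allX x y : x != y -> X [set x; y].
Proof.
move=> xy.
have H1 : forall i j, i != j -> X [set v i; v j].
  move=> i j ij; case: (ltngtP i j) => [lt|gt|eq].
  - exact: Xchord.
  - exact: Xsym (Xchord gt).
  - by move: ij; rewrite (val_inj eq) eqxx.
case: (cover x) => [Ex|[Ex|[i Ex]]]; case: (cover y) => [Ey|[Ey|[j Ey]]];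
  subst x y.
all: try (by rewrite eqxx in xy).
- exact: Xst.
- exact: Xs.
- exact: Xsym Xst.
- exact: Xt.
- exact: Xsym (Xs i).
- exact: Xsym (Xt i).
- by apply: H1; apply: contraNneq xy => ->.
Qed.

Lemma main_ex : k_expressing (tight v s t) (n - 1).
Proof.
exists Q; split; [|split].
- apply/subsetP => e; rewrite !inE => /orP[/imsetP[i _ ->] | /eqP->];
    rewrite cards2.
  + by have := vs i; rewrite eq_sym => ->.
  + by have := vt o0; rewrite eq_sym => ->.
- rewrite cardsU cards1.
  have := leq_imset_card (fun i : 'I_(n - 2) => [set s; v i]) 'I_(n - 2).
  rewrite card_ord => H; apply: leq_trans (leq_subr _ _) _; move: H; set A := #|_|; lia.
- move=> e; rewrite inE => /cards2P[x [y [xy ->]]].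
  exact: allX.
Qed.
End M.

Theorem lemma10 (n : nat) (v : 'I_(n - 2) -> 'I_n) (s t : 'I_n) :
  5 <= n -> odd n -> injective v -> s != t ->
  (forall i, v i != s) -> (forall i, v i != t) ->
  k_expressing (tight v s t) (n - 1).
Proof.
move=> n5 nodd vinj st vs vt.
exact: main_ex.
Qed.
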